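(* Let $n\ge 2$ and let $B$ be an $n\times n$ agreement matrix. If $0<H(X_B^+)\le H(Y_B^+)$, then $IA_\epsilon(B)$ exists and $$IA_\epsilon(B)=1+\frac{H(Y_B^+)-H((X_BY_B)^+)}{H(X_B^+)}.$$
   Context: An $n\times n$ agreement matrix $B$ has nonnegative entries $B[y][x]$ (row $y$, column $x$), not all zero. For any $n\times n$ matrix $M$ with nonnegative real entries not all zero, let $S_M=\sum_{y,x}M[y][x]$ and define random variables $X_M$ on $\{1,\dots,n\}$ with $P(X_M=x)=\sum_yM[y][x]/S_M$, $Y_M$ with $P(Y_M=y)=\sum_xM[y][x]/S_M$, and the joint variable $X_MY_M$ with $P(X_MY_M=(y,x))=M[y][x]/S_M$. $H$ is Shannon entropy in base 2, defined only when all probabilities are positive. The information agreement is $IA(M)=\frac{H(X_M)+H(Y_M)-H(X_MY_M)}{\min\{H(X_M),H(Y_M)\}}$. For $\epsilon>0$, the $0$-freed matrix $B_\epsilon$ is obtained from $B$ by replacing every zero entry by $\epsilon$; then $IA_\epsilon(B)=\lim_{\epsilon\to0^+}IA(B_\epsilon)$ (when this limit exists). For a random variable $Z$ on $\mathcal{Z}$, the refined variable $Z^+$ is $Z$ restricted to $\{z:p_Z(z)>0\}$ with the same probabilities, so $H(Z^+)=-\sum_{z:\,p_Z(z)>0}p_Z(z)\log_2p_Z(z)$. *)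

(* Defs.v *)
From HB Require Import structures.
From mathcomp Require Import all_boot all_order all_algebra.
From mathcomp Require Import all_classical all_reals all_analysis.
Set Implicit Arguments. Unset Strict Implicit. Unset Printing Implicit Defensive.
Import Order.TTheory GRing.Theory Num.Theory.
Import numFieldNormedType.Exports.
Local Open Scope ring_scope.

Section IA.
Variable R : realType.

Definition log2 (x : R) : R := ln x / ln 2.

Definition entropy (I : finType) (p : I -> R) : R :=
  - \sum_(i : I) p i * log2 (p i).

(* entropy of the refined variable: sum only over the support *)
Definition entropy_plus (I : finType) (p : I -> R) : R :=
  - \sum_(i : I | 0 < p i) p i * log2 (p i).

Variable n : nat.

(* M y x : row y, column x *)
Definition Smx (M : 'M[R]_n) : R := \sum_(y < n) \sum_(x < n) M y x.
Definition pX (M : 'M[R]_n) (x : 'I_n) : R := (\sum_(y < n) M y x) / Smx M.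
Definition pY (M : 'M[R]_n) (y : 'I_n) : R := (\sum_(x < n) M y x) / Smx M.
Definition pXY (M : 'M[R]_n) (yx : 'I_n * 'I_n) : R := M yx.1 yx.2 / Smx M.

Definition IA (M : 'M[R]_n) : R :=
  (entropy (pX M) + entropy (pY M) - entropy (pXY M))
  / Num.min (entropy (pX M)) (entropy (pY M)).

Definition zero_freed (B : 'M[R]_n) (eps : R) : 'M[R]_n :=
  \matrix_(y, x) (if B y x == 0 then eps else B y x).

End IA.

(* Main.v *)
Require Import Defs.
From HB Require Import structures.
From mathcomp Require Import all_boot all_order all_algebra.
From mathcomp Require Import all_classical all_reals all_analysis.
From mathcomp Require Import ring lra.
Import Order.TTheory GRing.Theory Num.Theory.
Import numFieldNormedType.Exports.
Local Open Scope classical_set_scope.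
Local Open Scope ring_scope.

Section Helpers.
Variable R : realType.

Lemma cvg_sumseq (T : Type) (F : set_system T) (FF : Filter F) (J : Type)
  (r : seq J) (P : pred J) (f : J -> T -> R) (l : J -> R) :
  (forall j, f j x @[x --> F] --> l j) ->
  \sum_(j <- r | P j) f j x @[x --> F] --> \sum_(j <- r | P j) l j.
Proof.
move=> H; elim: r => [|j r IH].
  under eq_fun do rewrite big_nil.
  rewrite big_nil; exact: cvg_cst.
under eq_fun do rewrite big_cons.
rewrite big_cons; case: (P j) => //.
exact: cvgD.
Qed.

Lemma min_formula (a b : R) : Num.min a b = (a + b - `|a - b|) / 2.
Proof.
rewrite minElt; have [ab|ba] := ltP a b.
  rewrite ler0_norm ?subr_le0 ?ltW //; lra.
rewrite ger0_norm ?subr_ge0 //; lra.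
Qed.

Lemma minl' (a b : R) : a <= b -> Num.min a b = a.
Proof.
move=> h; rewrite minElt; case: ltP => // h'.
by apply/eqP; rewrite eq_le h h'.
Qed.

Lemma xlnx_bound (u : R) : 0 <= u <= 1 ->
  - (2 * Num.sqrt u) <= u * ln u <= 2 * Num.sqrt u.
Proof.
case/andP=> u0 u1.
have [->|up] := eqVneq u 0.
  by rewrite ln0 // mulr0 sqrtr0 mulr0 oppr0 lexx.
have upos : 0 < u by rewrite lt0r up.
set s := Num.sqrt u.
have s0 : 0 < s by rewrite sqrtr_gt0.
have us : u = s ^+ 2 by rewrite sqr_sqrtr.
have lnu : ln u <= 0 by exact: ln_le0.
apply/andP; split; last first.
  apply: (le_trans (y := 0)); last by rewrite mulr_ge0 // ltW.
  by rewrite mulr_ge0_le0.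
have hl : ln u = ln s *+ 2 by rewrite us lnXn.
have hv : ln s^-1 = - ln s by rewrite lnV // posrE.
have hs : ln s^-1 < s^-1 by apply: ln_sublinear; rewrite invr_gt0.
rewrite hv in hs.
have h2 : s ^+ 2 * (- ln s) <= s ^+ 2 * s^-1.
  by rewrite ler_wpM2l ?exprn_ge0 ?ltW.
have h3 : s ^+ 2 * s^-1 = s by rewrite expr2 -mulrA divff ?mulr1 ?gt_eqF.
rewrite h3 in h2.
rewrite hl us mulrnAr.
have -> : s ^+ 2 * ln s *+ 2 = 2 * (s ^+ 2 * ln s) by rewrite mulr_natl.
have : s ^+ 2 * (- ln s) = - (s ^+ 2 * ln s) by rewrite mulrN.
move=> e; rewrite e in h2; lra.
Qed.

Lemma xlnx_cvg (T : Type) (F : set_system T) (FF : ProperFilter F)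
  (u : T -> R) (p : R) :
  0 <= p -> (\forall x \near F, 0 <= u x) -> u x @[x --> F] --> p ->
  u x * ln (u x) @[x --> F] --> p * ln p.
Proof.
move=> p0 un uc.
have [pz|pn] := eqVneq p 0; last first.
  have pp : 0 < p by rewrite lt0r pn.
  apply: cvgM => //.
  exact: (continuous_cvg _ (continuous_ln pp) uc).
subst p; rewrite ln0 // mulr0.
have u1 : \forall x \near F, u x < 1 by exact: (@cvgr_lt _ _ _ _ u 0 uc 1 (@ltr01 R)).
have sc : Num.sqrt (u x) @[x --> F] --> 0.
  have := continuous_cvg _ (@sqrt_continuous R 0) uc.
  by rewrite sqrtr0; apply.
have h2 : 2 * Num.sqrt (u x) @[x --> F] --> (2 * 0 : R) by exact: (cvgM (cvg_cst (2:R)) sc).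
apply: (@squeeze_cvgr _ _ _ _ (fun x => - (2 * Num.sqrt (u x)))
          (fun x => 2 * Num.sqrt (u x))).
- near=> x; apply: xlnx_bound.
  apply/andP; split; [near: x; exact: un| apply: ltW; near: x; exact: u1].
- rewrite -[0]oppr0 -(mulr0 (2:R)); have := cvgN h2; apply.
- by rewrite -(mulr0 (2:R)).
Unshelve. all: by end_near.
Qed.

Lemma entropy_plusE (I : finType) (p : I -> R) : (forall i, 0 <= p i) ->
  entropy_plus p = - \sum_(i : I) p i * log2 (p i).
Proof.
move=> h; rewrite /entropy_plus big_mkcond /=; congr (- _).
apply: eq_bigr => i _; case: ifP => // /negbT.
rewrite -leNgt => h'; have -> : p i = 0 by apply/eqP; rewrite eq_le h' h.
by rewrite mul0r.
Qed.

Lemma entropy_cvg (T : Type) (F : set_system T) (FF : ProperFilter F)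
  (I : finType) (p : T -> I -> R) (q : I -> R) :
  (forall i, 0 <= q i) -> (forall i, \forall x \near F, 0 <= p x i) ->
  (forall i, p x i @[x --> F] --> q i) ->
  entropy (p x) @[x --> F] --> entropy_plus q.
Proof.
move=> q0 pn pc; rewrite entropy_plusE // /entropy.
apply: cvgN; apply: cvg_sumseq => i.
rewrite /log2.
under eq_fun do rewrite mulrA.
rewrite mulrA.
have h := @xlnx_cvg T F FF (fun x => p x i) (q i) (q0 i) (pn i) (pc i).
exact: (cvgM h (cvg_cst _)).
Qed.

Lemma le_sum_one (I : finType) (G : I -> R) (i : I) :
  (forall j, 0 <= G j) -> G i <= \sum_j G j.
Proof.
by move=> h; rewrite (bigD1 i) //= lerDl sumr_ge0.
Qed.

Lemma Smx_ge0 n (M : 'M[R]_n) : (forall y x, 0 <= M y x) -> 0 <= Smx M.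
Proof. by move=> h; rewrite /Smx; apply: sumr_ge0 => y _; apply: sumr_ge0. Qed.

Lemma pX_ge0 n (M : 'M[R]_n) : (forall y x, 0 <= M y x) -> forall x, 0 <= pX M x.
Proof. by move=> h x; rewrite /pX divr_ge0 ?Smx_ge0 ?sumr_ge0. Qed.
Lemma pY_ge0 n (M : 'M[R]_n) : (forall y x, 0 <= M y x) -> forall x, 0 <= pY M x.
Proof. by move=> h x; rewrite /pY divr_ge0 ?Smx_ge0 ?sumr_ge0. Qed.
Lemma pXY_ge0 n (M : 'M[R]_n) : (forall y x, 0 <= M y x) -> forall x, 0 <= pXY M x.
Proof. by move=> h x; rewrite /pXY divr_ge0 ?Smx_ge0. Qed.

End Helpers.

Theorem theorem1 (R : realType) (n : nat) (B : 'M[R]_n) :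
  (2 <= n)%N ->
  (forall y x, 0 <= B y x) ->
  (exists y x, B y x != 0) ->
  0 < entropy_plus (pX B) ->
  entropy_plus (pX B) <= entropy_plus (pY B) ->
  IA (zero_freed B eps) @[eps --> 0^'+] -->
    1 + (entropy_plus (pY B) - entropy_plus (pXY B)) / entropy_plus (pX B).
Proof.
move=> _ B0 [y0 [x0 Bnz]] HXp HXY.
have S0 : Smx B != 0.
  rewrite gt_eqF //; apply: (lt_le_trans (y := B y0 x0)).
    by rewrite lt0r Bnz B0.
  apply: (le_trans (y := \sum_x B y0 x)); first exact: le_sum_one.
  by apply: le_sum_one => y; apply: sumr_ge0.
have ent : forall y x, zero_freed B e y x @[e --> 0^'+] --> B y x.
  move=> y x; rewrite /zero_freed.
  under eq_fun do rewrite mxE.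
  case: eqP => [->|_]; last exact: cvg_cst.
  apply: cvg_at_right_filter; exact: cvg_id.
have nn : \forall e \near 0^'+, forall y x, 0 <= zero_freed B e y x.
  apply: filterS (@nbhs_right_gt R 0) => e /= e0 y x.
  by rewrite mxE; case: ifP => // _; apply: ltW.
have Sc : Smx (zero_freed B e) @[e --> 0^'+] --> Smx B.
  by apply: cvg_sumseq => y; apply: cvg_sumseq => x; apply: ent.
have SVc : (Smx (zero_freed B e))^-1 @[e --> 0^'+] --> (Smx B)^-1.
  exact: cvgV.
have cX : entropy (pX (zero_freed B e)) @[e --> 0^'+] --> entropy_plus (pX B).
  apply: entropy_cvg; first exact: pX_ge0.
    move=> i; near=> e; apply: pX_ge0; near: e; exact: nn.
  move=> i; apply: cvgM => //; apply: cvg_sumseq => y; exact: ent.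
have cY : entropy (pY (zero_freed B e)) @[e --> 0^'+] --> entropy_plus (pY B).
  apply: entropy_cvg; first exact: pY_ge0.
    move=> i; near=> e; apply: pY_ge0; near: e; exact: nn.
  move=> i; apply: cvgM => //; apply: cvg_sumseq => y; exact: ent.
have cXY : entropy (pXY (zero_freed B e)) @[e --> 0^'+] --> entropy_plus (pXY B).
  apply: entropy_cvg; first exact: pXY_ge0.
    move=> i; near=> e; apply: pXY_ge0; near: e; exact: nn.
  move=> i; apply: cvgM => //; exact: ent.
have cmin : Num.min (entropy (pX (zero_freed B e))) (entropy (pY (zero_freed B e)))
     @[e --> 0^'+] --> Num.min (entropy_plus (pX B)) (entropy_plus (pY B)).
  under eq_fun do rewrite min_formula.
  rewrite min_formula.
  set a := entropy_plus (pX B); set b := entropy_plus (pY B).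
  set f := fun e => entropy (pX (zero_freed B e)).
  set g := fun e => entropy (pY (zero_freed B e)).
  have h : f e + g e - `|f e - g e| @[e --> 0^'+] --> a + b - `|a - b|.
    apply: cvgB; first exact: cvgD.
    by apply: cvg_norm; apply: cvgB.
  exact: (cvgM h (cvg_cst _)).
have HXn : Num.min (entropy_plus (pX B)) (entropy_plus (pY B)) != 0.
  by rewrite minl' // gt_eqF.
have -> : 1 + (entropy_plus (pY B) - entropy_plus (pXY B)) / entropy_plus (pX B)
  = (entropy_plus (pX B) + entropy_plus (pY B) - entropy_plus (pXY B))
     / Num.min (entropy_plus (pX B)) (entropy_plus (pY B)).
  by rewrite minl' // -[in RHS]addrA [in RHS]mulrDl divff // gt_eqF.
rewrite /IA; apply: cvgM; first by apply: cvgB => //; apply: cvgD.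
exact: cvgV.
Unshelve. all: by end_near.
Qed.
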